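(* For any variety $\mathcal{V}$ of $\Omega$-algebras, the variety $\mathcal{V}^p$ is generated by the quasivariety $\mathcal{V}\circ\mathcal{S}$, i.e. $\mathcal{V}^p$ is the smallest variety containing $\mathcal{V}\circ\mathcal{S}$.
   Context: Standing conventions: $\Omega$-algebras are of a plural similarity type (no nullary operation symbols, at least one operation symbol of arity $\ge2$). $T_n$ is the set of $\Omega$-terms in $x_1,\dots,x_n$ in which all $n$ variables occur. An identity is regular if the same variables occur on both sides. $\mathcal{S}$ is the variety of $\Omega$-algebras satisfying all regular identities. $\mathcal{V}\circ\mathcal{S}$ is the class of $\Omega$-algebras $A$ having a congruence $\theta$ with $A/\theta\in\mathcal{S}$ and every $\theta$-class (a subalgebra) in $\mathcal{V}$. Prolongation: for an identity $\sigma$ of the form $u(y_1,\dots,y_n)=v(y_1,\dots,y_n)$ and $m\ge1$, $\sigma^p_m$ is the set of identities $u(r_1,\dots,r_n)=v(r_1,\dots,r_n)$ obtained by substituting $r_i(x_1,\dots,x_m)$ for $y_i$, with $r_i$ ranging over $T_m$; $\sigma^p=\bigcup_m\sigma^p_m$; $\Sigma^p=\bigcup_{\sigma\in\Sigma}\sigma^p$. $\mathcal{V}^p$ is the variety defined by $\mathrm{Id}(\mathcal{V})^p$, where $\mathrm{Id}(\mathcal{V})$ is the set of all identities holding in $\mathcal{V}$. *)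

(* Defs.v *)
From mathcomp Require Import all_boot.
From Stdlib Require Import ClassicalEpsilon.
Set Implicit Arguments. Unset Strict Implicit. Unset Printing Implicit Defensive.

Section UniversalAlgebra.
Variable Omega : Type.
Variable ar : Omega -> nat.

(* Terms over the variables x_1, x_2, ... (x_{i+1} is [Var i]). *)
Inductive term : Type :=
| Var : nat -> term
| Op : forall o : Omega, ('I_(ar o) -> term) -> term.
Arguments Op o a : clear implicits.

Fixpoint occurs (i : nat) (t : term) : Prop :=
  match t with
  | Var n => n = i
  | Op o a => exists j, occurs i (a j)
  end.

Fixpoint subst (s : nat -> term) (t : term) : term :=
  match t with
  | Var n => s n
  | Op o a => Op o (fun j => subst s (a j))
  end.

Definition in_T (m : nat) (t : term) : Prop := forall i, occurs i t <-> (i < m)%N.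

Record alg : Type := Alg {
  carrier :> Type;
  ops : forall o : Omega, ('I_(ar o) -> carrier) -> carrier }.
Arguments ops a o _ : clear implicits.

Fixpoint eval (A : alg) (e : nat -> A) (t : term) : A :=
  match t with
  | Var n => e n
  | Op o a => ops A o (fun j => eval e (a j))
  end.

Definition identity : Type := (term * term)%type.

Definition holds (A : alg) (s : identity) : Prop :=
  forall e : nat -> A, eval e s.1 = eval e s.2.

Definition Mod (Sigma : identity -> Prop) (A : alg) : Prop :=
  forall s, Sigma s -> holds A s.

Definition Id (K : alg -> Prop) (s : identity) : Prop :=
  forall A, K A -> holds A s.

Definition is_variety (K : alg -> Prop) : Prop :=
  exists Sigma : identity -> Prop, forall A, K A <-> Mod Sigma A.

Definition regular (s : identity) : Prop :=
  forall i, occurs i s.1 <-> occurs i s.2.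

Definition S_class : alg -> Prop := Mod regular.

Definition prolong_m (s : identity) (m : nat) (s' : identity) : Prop :=
  exists r : nat -> term,
    (forall i, occurs i s.1 \/ occurs i s.2 -> in_T m (r i)) /\
    s' = (subst r s.1, subst r s.2).

Definition prolongation (Sigma : identity -> Prop) (s' : identity) : Prop :=
  exists s, Sigma s /\ exists m, (0 < m)%N /\ prolong_m s m s'.

Definition Vp (V : alg -> Prop) : alg -> Prop := Mod (prolongation (Id V)).

Definition congruence (A : alg) (theta : A -> A -> Prop) : Prop :=
  [/\ (forall x, theta x x),
      (forall x y, theta x y -> theta y x),
      (forall x y z, theta x y -> theta y z -> theta x z) &
      (forall o (a b : 'I_(ar o) -> A),
          (forall j, theta (a j) (b j)) -> theta (ops A o a) (ops A o b))].

Section Quotient.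
Variables (A : alg) (theta : A -> A -> Prop).

Definition qcarrier : Type := {P : A -> Prop | exists a, P = theta a}.

Definition qclass (a : A) : qcarrier := exist _ (theta a) (ex_intro _ a erefl).

Definition qrepr (q : qcarrier) : A :=
  proj1_sig (constructive_indefinite_description _ (proj2_sig q)).

Definition quot : alg :=
  @Alg qcarrier (fun o qs => qclass (ops A o (fun j => qrepr (qs j)))).
End Quotient.

Section ClassSubalgebra.
Variables (A : alg) (theta : A -> A -> Prop) (c : A).

Definition class_closed : Prop :=
  forall o (a : 'I_(ar o) -> A), (forall j, theta c (a j)) -> theta c (ops A o a).

Definition subalg (H : class_closed) : alg :=
  @Alg {x : A | theta c x}
    (fun o a => exist _ (ops A o (fun j => proj1_sig (a j)))
                        (H o (fun j => proj1_sig (a j)) (fun j => proj2_sig (a j)))).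
End ClassSubalgebra.

Definition VcircS (V : alg -> Prop) (A : alg) : Prop :=
  exists theta : A -> A -> Prop,
    [/\ congruence theta,
        S_class (quot theta) &
        forall c : A, exists H : class_closed theta c, V (subalg H)].

Definition plural : Prop :=
  (forall o, (0 < ar o)%N) /\ exists o, (2 <= ar o)%N.

End UniversalAlgebra.

(* Main.v *)
Require Import Defs.
From mathcomp Require Import all_boot.
From Stdlib Require Import FunctionalExtensionality ProofIrrelevance PropExtensionality ClassicalEpsilon.
Set Implicit Arguments. Unset Strict Implicit. Unset Printing Implicit Defensive.

Section Gen.
Variables (Omega : Type) (ar : Omega -> nat).
Notation term := (term ar).
Notation Var := (Var ar).

Lemma eval_subst (A : alg ar) (e : nat -> A) s (t : term) :
  eval e (subst s t) = eval (fun i => eval e (s i)) t.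
Proof.
elim: t => [n|o a IH] //=; congr (ops _); apply: functional_extensionality => j; exact: IH.
Qed.

Lemma eval_ext (A : alg ar) (e e' : nat -> A) (t : term) :
  (forall i, occurs i t -> e i = e' i) -> eval e t = eval e' t.
Proof.
elim: t => [n|o a IH] /= H; first by apply: H.
congr (ops _); apply: functional_extensionality => j; apply: IH => i Hi; apply: H; by exists j.
Qed.

Lemma occurs_subst i s (t : term) :
  occurs i (subst s t) <-> exists k, occurs k t /\ occurs i (s k).
Proof.
elim: t => [n|o a IH] /=.
  by split; [move=> h; exists n | move=> [k [-> h]]].
split.
  by move=> [j /IH [k [h1 h2]]]; exists k; split => //; exists j.
by move=> [k [[j h1] h2]]; exists j; apply/IH; exists k.
Qed.

Lemma subst_Var (t : term) : subst Var t = t.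
Proof.
elim: t => [n|o a IH] //=; congr Op; apply: functional_extensionality => j; exact: IH.
Qed.

Definition Talg : alg ar := @Alg _ _ term (fun o a => Op a).

Lemma eval_T s (t : term) : eval (A:=Talg) s t = subst s t.
Proof.
elim: t => [n|o a IH] //=; congr Op; apply: functional_extensionality => j; exact: IH.
Qed.

Lemma has_var (Hpos : forall o, 0 < ar o) (t : term) : exists i, occurs i t.
Proof.
elim: t => [n|o a IH] /=; first by exists n.
have [i Hi] := IH (Ordinal (Hpos o)). by exists i; exists (Ordinal (Hpos o)).
Qed.

Section Q.
Variables (A : alg ar) (theta : A -> A -> Prop) (Hc : congruence theta).

Lemma theta_eq a b : theta a b -> theta a = theta b.
Proof.
case: Hc => Hr Hs Ht _ h; apply: functional_extensionality => x;
apply: propositional_extensionality; split => h'; eauto.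
Qed.

Lemma qclass_eq a b : theta a b -> qclass theta a = qclass theta b.
Proof.
move=> h; rewrite /qclass; apply: ProofIrrelevanceTheory.subset_eq_compat; exact: theta_eq.
Qed.

Lemma qclass_inj a b : qclass theta a = qclass theta b -> theta a b.
Proof.
case: Hc => Hr _ _ _ h; have : theta a = theta b by move: h => /(f_equal (@proj1_sig _ _)).
by move=> E; rewrite E.
Qed.

Lemma qclass_qrepr (q : qcarrier theta) : q = qclass theta (qrepr q).
Proof.
case: q => P h; rewrite /qrepr /qclass /=.
case: (constructive_indefinite_description _ h) => b Hb /=.
by apply: ProofIrrelevanceTheory.subset_eq_compat.
Qed.

Lemma qrepr_qclass a : theta (qrepr (qclass theta a)) a.
Proof.
case: Hc => Hr Hs _ _; rewrite /qrepr /=.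
case: (constructive_indefinite_description _ _) => b /= Hb.
apply: Hs; rewrite Hb; exact: Hr.
Qed.

Lemma eval_quot (e : nat -> A) (t : term) :
  eval (A:=quot theta) (fun i => qclass theta (e i)) t = qclass theta (eval e t).
Proof.
elim: t => [n|o a IH] //=.
have -> : (fun j => qrepr (eval (A:=quot theta) (fun i => qclass theta (e i)) (a j)))
  = (fun j => qrepr (qclass theta (eval e (a j)))).
  by apply: functional_extensionality => j; rewrite IH.
apply: qclass_eq; case: Hc => _ _ _ Ho; apply: Ho => j; exact: qrepr_qclass.
Qed.
End Q.

Lemma proj_eval (A : alg ar) (theta : A -> A -> Prop) c (H : class_closed theta c)
  (e : nat -> subalg H) (t : term) :
  proj1_sig (eval e t) = eval (fun i => proj1_sig (e i)) t.
Proof.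
elim: t => [n|o a IH] //=; congr (ops _); apply: functional_extensionality => j; exact: IH.
Qed.

End Gen.

Section Gen2.
Variables (Omega : Type) (ar : Omega -> nat).

Fixpoint vars (t : term ar) : seq nat :=
  match t with
  | Defs.Var n => [:: n]
  | @Op _ _ o a => flatten [seq vars (a j) | j <- enum 'I_(ar o)]
  end.

Lemma mem_vars i (t : term ar) : i \in vars t <-> occurs i t.
Proof.
elim: t => [n|o a IH] /=; first by rewrite inE; split => [/eqP|->].
split.
  by move/flattenP => [l /mapP [j _ ->] h]; exists j; apply/IH.
move=> [j hj]; apply/flattenP; exists (vars (a j)); last by apply/IH.
by apply/mapP; exists j; rewrite ?mem_enum.
Qed.

Lemma sig_inj (A : Type) (P : A -> Prop) (x y : {z | P z}) :
  proj1_sig x = proj1_sig y -> x = y.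
Proof. case: x y => x hx [y hy] /= E; exact: ProofIrrelevanceTheory.subset_eq_compat. Qed.

Definition SL : alg ar := @Alg _ _ bool (fun o a => [forall j, a j]).

Lemma sl_eval (e : nat -> bool) (t : term ar) :
  eval (A:=SL) e t = true <-> (forall i, occurs i t -> e i = true).
Proof.
elim: t => [n|o a IH] /=.
  by split => [h i <-|h]; [|apply: h].
split.
  move/forallP => h i [j hj]; exact: (proj1 (IH j) (h j)).
move=> h; apply/forallP => j; apply/IH => i hi; apply: h; by exists j.
Qed.

Lemma sl_same (t t' : term ar) : (forall i, occurs i t <-> occurs i t') ->
  forall e, eval (A:=SL) e t = eval (A:=SL) e t'.
Proof.
move=> h e.
have: eval (A:=SL) e t = true <-> eval (A:=SL) e t' = true.
  rewrite !sl_eval; split => h1 i hi; apply: h1; exact/h.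
by case: (eval _ t) (eval _ t') => [] [] [h1 h2] //; [symmetry|]; auto.
Qed.

Lemma sl_occ (t t' : term ar) : holds SL (t, t') -> forall i, occurs i t <-> occurs i t'.
Proof.
move=> h k.
have E := h (fun i => i != k); simpl in E.
have key : forall s : term ar, eval (A:=SL) (fun i => i != k) s = true <-> ~ occurs k s.
  move=> s; rewrite sl_eval; split.
    by move=> H Hk; move: (H k Hk); rewrite eqxx.
  move=> H i Hi; apply/eqP => Eik; apply: H; by rewrite -Eik.
have := key t; have := key t'; rewrite E => h1 h2.
split => Ho; apply: NNPP => Hn.
  by move/h1: Hn; move/h2.
by move/h2: Hn; move/h1.
Qed.

Lemma prolong_occ (Hpos : forall o, 0 < ar o) (u : term ar) r m :
  (forall i, occurs i u -> in_T m (r i)) -> forall j, occurs j (subst r u) <-> j < m.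
Proof.
move=> H j; rewrite occurs_subst; split.
  by move=> [k [hk hj]]; apply/(H k hk).
move=> hj; have [k hk] := has_var Hpos u; exists k; split => //; exact/(H k hk).
Qed.

Lemma SL_Vp (Hpos : forall o, 0 < ar o) V : Vp V SL.
Proof.
move=> s' [[u v] [_ [m [_ [r [Hr ->]]]]]] e /=.
apply: sl_same => j.
rewrite (prolong_occ Hpos (u:=u) (r:=r) (m:=m)); last by move=> i hi; apply: Hr; left.
rewrite (prolong_occ Hpos (u:=v) (r:=r) (m:=m)) //; by move=> i hi; apply: Hr; right.
Qed.

End Gen2.

Section Main.
Variables (Omega : Type) (ar : Omega -> nat) (Hpos : forall o, 0 < ar o).
Variable V : alg ar -> Prop.

Lemma VcircS_Vp A : VcircS V A -> Vp V A.
Proof.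
move=> [th [Hc HS Hcl]] s [[u v] [HuvV [m [Hm [r [Hr ->]]]]]] e /=.
have [k hk] := has_var Hpos u.
set c := eval e (r k).
have [H HVB] := Hcl c.
have Hcls : forall i, occurs i u \/ occurs i v -> th c (eval e (r i)).
  move=> i hi.
  have Hreg : regular (r k, r i).
    move=> j /=; rewrite (Hr k (or_introl hk) j) (Hr i hi j); done.
  have := HS _ Hreg (fun j => qclass th (e j)); rewrite /= !eval_quot //.
  exact: qclass_inj.
pose eB : nat -> subalg H := fun i =>
  match excluded_middle_informative (th c (eval e (r i))) with
  | left h => exist _ _ h
  | right _ => exist _ c (let: And4 h _ _ _ := Hc in h c) end.
have key : forall t : term ar, (forall i, occurs i t -> occurs i u \/ occurs i v) ->
   proj1_sig (eval eB t) = eval e (subst r t).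
  move=> t ht; rewrite proj_eval eval_subst; apply: eval_ext => i hi.
  rewrite /eB; case: excluded_middle_informative => // hn.
  by exfalso; apply: hn; apply: Hcls; apply: ht.
have := HuvV _ HVB eB; rewrite /= => E.
rewrite -key; last by move=> i hi; left.
rewrite -key; last by move=> i hi; right.
by rewrite E.
Qed.

Definition eqV (t t' : term ar) := forall B, Vp V B -> holds B (t, t').

Lemma eqV_cong : congruence (A:=Talg ar) eqV.
Proof.
split.
- by move=> x B _ e.
- by move=> x y h B HB e; symmetry; apply: h.
- by move=> x y z h1 h2 B HB e; rewrite (h1 B HB e) (h2 B HB e).
- move=> o a b h B HB e /=; congr (ops _); apply: functional_extensionality => j.
  exact: (h j B HB e).
Qed.

Lemma eqV_occ t t' : eqV t t' -> forall i, occurs i t <-> occurs i t'.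
Proof. move=> h; apply: sl_occ; apply: h; exact: SL_Vp. Qed.

Definition F : alg ar := quot (A:=Talg ar) eqV.

Definition occF (q : F) i := occurs i (qrepr q).

Lemma occF_qclass t i : occF (qclass (A:=Talg ar) eqV t) i <-> occurs i t.
Proof. rewrite /occF; apply: eqV_occ; exact: (qrepr_qclass (A:=Talg ar) eqV_cong). Qed.

Lemma evalF (e : nat -> F) t : eval e t = qclass (A:=Talg ar) eqV (subst (fun i => qrepr (e i)) t).
Proof.
have He : e = (fun i => qclass (A:=Talg ar) eqV (qrepr (e i))).
  apply: functional_extensionality => i; exact: qclass_qrepr.
by rewrite {1}He (eval_quot eqV_cong) eval_T.
Qed.

Definition thF (q q' : F) := forall i, occF q i <-> occF q' i.

Lemma thF_cong : congruence thF.
Proof.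
split.
- by move=> x i.
- by move=> x y h i; split => /h.
- by move=> x y z h1 h2 i; rewrite (h1 i) (h2 i).
- move=> o a b h i; rewrite /= !occF_qclass /=; split => [[j hj]|[j hj]]; exists j; exact/(h j).
Qed.

Hypothesis HV : is_variety V.

Lemma rename_prolong (t0 : term ar) (s : nat -> term ar)
  (Hs : forall i j, occurs j t0 <-> occurs j (s i)) u v :
  Id V (u, v) -> eqV (subst s u) (subst s v).
Proof.
move=> HId B HB e.
pose l := undup (vars t0).
pose r := fun i => subst (fun k => Var ar (index k l)) (s i).
have occl : forall j, j \in l <-> occurs j t0.
  by move=> j; rewrite mem_undup mem_vars.
have HT : forall i, in_T (size l) (r i).
  move=> i j; rewrite occurs_subst; split.
    move=> [k [hk /= <-]]; rewrite index_mem; apply/occl/(Hs i k); done.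
  move=> hj; exists (nth 0 l j); split; last by rewrite /= index_uniq // undup_uniq.
  apply/(Hs i); apply/occl; exact: mem_nth.
have Hm : 0 < size l.
  have [k hk] := has_var Hpos t0; move/occl: hk; by case: (l).
have := HB (subst r u, subst r v) _ (fun j => e (nth 0 l j)).
rewrite /= !eval_subst => E.
have Er : forall i, eval (fun j => e (nth 0 l j)) (r i) = eval e (s i).
  move=> i; rewrite eval_subst /=; apply: eval_ext => k hk.
  rewrite nth_index //; apply/occl/(Hs i k); done.
rewrite -(functional_extensionality _ _ Er) E; first done.
exists (u, v); split => //; exists (size l); split => //; exists r; split => //.
Qed.

Lemma F_VcircS : VcircS V F.
Proof.
exists thF; split; first exact: thF_cong.
- move=> [p q] Hreg e /=.
  have -> : e = (fun i => qclass thF (qrepr (e i))).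
    apply: functional_extensionality => i; exact: qclass_qrepr.
  rewrite !(eval_quot thF_cong); apply: (qclass_eq thF_cong) => i.
  rewrite !evalF !occF_qclass !occurs_subst; split => [[k [hk h]]|[k [hk h]]];
  exists k; split => //; exact/(Hreg k).
- move=> c.
  have H : class_closed thF c.
    move=> o a h i; change (occF c i <-> occF (qclass (A:=Talg ar) eqV (Op (fun j => qrepr (a j)))) i); rewrite occF_qclass /=; split.
      move=> hi; exists (Ordinal (Hpos o)); exact/(h _ i).
    by move=> [j hj]; exact/(h j i).
  exists H.
  have [SV HSV] := HV; apply/HSV => s Hs.
  have HsId : Id V s by move=> A HA; move/HSV: HA; apply.
  case: s Hs HsId => u v _ HId eB /=.
  apply: sig_inj; rewrite (proj_eval eB u) (proj_eval eB v) !evalF; apply: (qclass_eq eqV_cong).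
  apply: (rename_prolong (t0:=qrepr c)) => // i j.
  exact: (proj2_sig (eB i) j).
Qed.

Lemma Vp_sub W : is_variety W -> (forall A, VcircS V A -> W A) -> forall A, Vp V A -> W A.
Proof.
move=> [SW HW] Hsub A HA; apply/HW => s Hs.
have := (proj1 (HW F) (Hsub _ F_VcircS)) s Hs (fun i => qclass (A:=Talg ar) eqV (Var ar i)).
rewrite !(eval_quot eqV_cong) !eval_T !subst_Var => E.
have := qclass_inj eqV_cong E; case: s {Hs E} => a b h; exact: h.
Qed.

End Main.

Theorem corollary3p4 (Omega : Type) (ar : Omega -> nat) (Hpl : plural ar)
  (V : alg ar -> Prop) (HV : is_variety V) :
  is_variety (Vp V) /\
  (forall A, VcircS V A -> Vp V A) /\
  (forall W : alg ar -> Prop, is_variety W ->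
     (forall A, VcircS V A -> W A) -> forall A, Vp V A -> W A).
Proof.
have Hpos := proj1 Hpl.
split; first by exists (prolongation (Id V)).
split; first exact: VcircS_Vp.
exact: Vp_sub.
Qed.
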